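(* Let $n \geq 1$, $z \geq 2$, $\epsilon > 0$, and let $\mathbf{f}_1^{(0)}, \dots, \mathbf{f}_n^{(0)}$ be probability vectors in $\mathbb{R}^z$. For $t \geq 1$ define recursively $$p_{i,j}^{(t)} = \frac{\alpha_i^{(t)}}{\epsilon + D\left(\mathbf{f}_i^{(t-1)}, \mathbf{f}_j^{(t-1)}\right)}, \qquad \mathbf{f}_i^{(t)} = \sum_{j=1}^n p_{i,j}^{(t)} \mathbf{f}_j^{(t-1)},$$ where $\alpha_i^{(t)} > 0$ normalizes so that $\sum_{j} p_{i,j}^{(t)} = 1$ and $D(\mathbf{u}, \mathbf{v}) = \sqrt{\frac{1}{z}\sum_{k=1}^{z} (u_k - v_k)^2}$. Let $R$ be the quadratic scoring rule $R(\mathbf{g}, e) = 2g_e - \sum_{k=1}^z g_k^2$ for a probability vector $\mathbf{g} \in \mathbb{R}^z$ and outcome index $e \in \{1,\dots,z\}$. Then $R$ is effective with respect to the set of weights $\{p_{i,j}^{(t)} : 1 \le i,j \le n\}$ at every time $t \geq 1$; that is, for every $t \ge 1$ and all $i, j, k \in \{1,\dots,n\}$, $$p_{i,j}^{(t)} < p_{i,k}^{(t)} \iff \mathbb{E}_{\mathbf{f}_i^{(t-1)}}\left[R\left(\mathbf{f}_k^{(t-1)}\right)\right] > \mathbb{E}_{\mathbf{f}_i^{(t-1)}}\left[R\left(\mathbf{f}_j^{(t-1)}\right)\right].$$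
   Context: For probability vectors $\mathbf{f}, \mathbf{g} \in \mathbb{R}^z$, the $\mathbf{f}$-expected score of reporting $\mathbf{g}$ is $\mathbb{E}_{\mathbf{f}}[R(\mathbf{g})] = \sum_{e=1}^z f_e\, R(\mathbf{g}, e)$. *)

(* Defs.v *)
From mathcomp Require Import all_boot all_order all_algebra.
Set Implicit Arguments. Unset Strict Implicit. Unset Printing Implicit Defensive.
Import Order.TTheory GRing.Theory Num.Theory.
Local Open Scope ring_scope.

Section Defs.
Variables (R : rcfType) (n z : nat).

Definition prob_vec (g : 'rV[R]_z) : Prop :=
  (forall k, 0 <= g 0 k) /\ \sum_(k < z) g 0 k = 1.

Definition Dist (u v : 'rV[R]_z) : R :=
  Num.sqrt (z%:R^-1 * \sum_(k < z) (u 0 k - v 0 k) ^+ 2).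

Definition alpha (eps : R) (f : 'I_n -> 'rV[R]_z) (i : 'I_n) : R :=
  (\sum_(l < n) (eps + Dist (f i) (f l))^-1)^-1.

(* p_{i,j} computed from the beliefs at the previous time *)
Definition weight (eps : R) (f : 'I_n -> 'rV[R]_z) (i j : 'I_n) : R :=
  alpha eps f i / (eps + Dist (f i) (f j)).

Definition update (eps : R) (f : 'I_n -> 'rV[R]_z) (i : 'I_n) : 'rV[R]_z :=
  \sum_(j < n) weight eps f i j *: f j.

Fixpoint traj (eps : R) (f0 : 'I_n -> 'rV[R]_z) (t : nat) : 'I_n -> 'rV[R]_z :=
  match t with
  | O => f0
  | t'.+1 => update eps (traj eps f0 t')
  end.

Definition quad_score (g : 'rV[R]_z) (e : 'I_z) : R :=
  2 * g 0 e - \sum_(k < z) g 0 k ^+ 2.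

Definition exp_score (f g : 'rV[R]_z) : R :=
  \sum_(e < z) f 0 e * quad_score g e.

End Defs.

(* Main.v *)
Require Import Defs.
From mathcomp Require Import all_boot all_order all_algebra.
From mathcomp Require Import ring.
Import Order.TTheory GRing.Theory Num.Theory.
Local Open Scope ring_scope.

Section Aux.
Variables (R : rcfType) (n z : nat).

Lemma sqrt_lt_iff (a b : R) : 0 <= a -> 0 <= b ->
  (Num.sqrt a < Num.sqrt b) = (a < b).
Proof.
move=> ha hb; have [->|bp] := eqVneq b 0.
  by rewrite sqrtr0 ltNge sqrtr_ge0 ltNge ha.
by rewrite ltr_sqrt // lt_def bp hb.
Qed.

Lemma exp_scoreE (f g : 'rV[R]_z) : \sum_(e < z) f 0 e = 1 ->
  exp_score f g = \sum_(e < z) f 0 e ^+ 2 - \sum_(e < z) (f 0 e - g 0 e) ^+ 2.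
Proof.
move=> hf; rewrite /exp_score /quad_score.
under eq_bigr do rewrite mulrBr.
rewrite big_split /= sumrN -mulr_suml hf mul1r -!sumrB.
apply: eq_bigr => e _; ring.
Qed.

Lemma sum_inv_pos (eps : R) (f : 'I_n -> 'rV[R]_z) (i : 'I_n) :
  (1 <= n)%N -> 0 < eps -> 0 < \sum_(l < n) (eps + Dist (f i) (f l))^-1.
Proof.
move=> hn he; case: n f i hn => [|m] f i // _.
rewrite big_ord_recl ltr_pwDl ?invr_gt0 ?ltr_wpDr ?sqrtr_ge0 //.
by apply: sumr_ge0 => l _; rewrite invr_ge0 addr_ge0 ?sqrtr_ge0 // ltW.
Qed.

Lemma traj_sum (eps : R) (f0 : 'I_n -> 'rV[R]_z) :
  (1 <= n)%N -> 0 < eps -> (forall i, \sum_(e < z) f0 i 0 e = 1) ->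
  forall t i, \sum_(e < z) traj eps f0 t i 0 e = 1.
Proof.
move=> hn he h0; elim=> [|t IH] i //=.
rewrite /update.
under eq_bigr do rewrite summxE.
rewrite exchange_big /=.
under eq_bigr do (under eq_bigr do rewrite mxE; rewrite -mulr_sumr IH mulr1).
rewrite /weight /alpha -mulr_sumr; apply: mulVf.
by rewrite gt_eqF // sum_inv_pos.
Qed.

End Aux.

Theorem proposition3 (R : rcfType) (n z : nat) (eps : R)
    (f0 : 'I_n -> 'rV[R]_z) :
  (1 <= n)%N -> (2 <= z)%N -> 0 < eps ->
  (forall i, prob_vec (f0 i)) ->
  forall (t : nat), (1 <= t)%N ->
  forall i j k : 'I_n,
    weight eps (traj eps f0 t.-1) i j < weight eps (traj eps f0 t.-1) i k <->
    exp_score (traj eps f0 t.-1 i) (traj eps f0 t.-1 k) >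
    exp_score (traj eps f0 t.-1 i) (traj eps f0 t.-1 j).
Proof.
move=> hn hz he hp t _ i j k.
set f := traj eps f0 t.-1.
have hs : forall l, \sum_(e < z) f l 0 e = 1.
  by move=> l; apply: traj_sum => // l'; case: (hp l').
rewrite !exp_scoreE // ltrD2l ltrN2.
have ha : 0 < alpha eps f i by rewrite /alpha invr_gt0 sum_inv_pos.
have hD : forall l, 0 < eps + Dist (f i) (f l).
  by move=> l; rewrite ltr_wpDr ?sqrtr_ge0.
rewrite /weight ltr_pM2l // ltf_pV2 ?posrE ?hD // ltrD2l /Dist sqrt_lt_iff;
  last 2 first.
- by rewrite mulr_ge0 ?invr_ge0 ?ler0n ?sumr_ge0 // => l _; rewrite sqr_ge0.
- by rewrite mulr_ge0 ?invr_ge0 ?ler0n ?sumr_ge0 // => l _; rewrite sqr_ge0.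
have hzp : 0 < (z%:R : R)^-1 by by rewrite invr_gt0 ltr0n (leq_trans _ hz).
by rewrite ltr_pM2l.
Qed.
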